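(* Let $X,Y\subseteq\mathbb{P}^n$ be real closed subschemes with $X\cap Y=\operatorname{Span}(X)\cap\operatorname{Span}(Y)$. Then the Hankel spectrahedron $\Sigma_{X\cup Y}^*$ is the convex hull of $\Sigma_X^*\cup\Sigma_Y^*$, and both $\Sigma_X^*$ and $\Sigma_Y^*$ are faces of $\Sigma_{X\cup Y}^*$.
   Context: For a subscheme $Z\subseteq\mathbb{P}^n$ with ideal $I(Z)$, $\mathbb{R}[Z]=\mathbb{R}[x_0,\dots,x_n]/I(Z)$, $\Sigma_Z\subseteq\mathbb{R}[Z]_2$ is the cone of sums of squares of elements of $\mathbb{R}[Z]_1$ and $\Sigma_Z^*\subseteq\mathbb{R}[Z]_2^*$ its dual cone (the Hankel spectrahedron). $X\cup Y$ is defined by $I(X)\cap I(Y)$, and $\Sigma_X^*,\Sigma_Y^*$ are regarded as subsets of $\mathbb{R}[X\cup Y]_2^*$ via the duals of the restriction (quotient) maps $\pi_X:\mathbb{R}[X\cup Y]_2\to\mathbb{R}[X]_2$ and $\pi_Y:\mathbb{R}[X\cup Y]_2\to\mathbb{R}[Y]_2$. $\operatorname{Span}(Z)$ is the projective linear span of $Z$. *)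

(* Defs.v *)
From HB Require Import structures.
From mathcomp Require Import all_boot all_order all_algebra.
From mathcomp Require Import reals.
From mathcomp Require Import mpoly.
Set Implicit Arguments. Unset Strict Implicit. Unset Printing Implicit Defensive.
Import Order.TTheory GRing.Theory Num.Theory.
Local Open Scope ring_scope.

Section Defs.
Variables (R : realType) (n : nat).
(* Homogeneous coordinate ring of P^n: R[x_0, ..., x_n]. *)
Local Notation S := {mpoly R[n.+1]}.

Definition is_ideal (I : S -> Prop) : Prop :=
  [/\ I 0, (forall p q, I p -> I q -> I (p + q)) & (forall f p, I p -> I (f * p))].

Definition is_homogeneous (I : S -> Prop) : Prop :=
  forall p d, I p -> I (pihomog mdeg d p).

(* Saturation with respect to the irrelevant ideal (x_0,...,x_n):
   p is in sat J iff (x_0,...,x_n)^k p is contained in J for some k,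
   i.e. m * p \in J for all monomials m of degree k. *)
Definition sat (J : S -> Prop) : S -> Prop :=
  fun p => exists k : nat, forall m : 'X_{1..n.+1}, mdeg m = k -> J ('X_[m] * p).

Definition is_saturated (I : S -> Prop) : Prop := forall p, sat I p -> I p.

(* A closed subscheme of P^n (over R) is given by its saturated homogeneous
   ideal I(Z); we identify Z with I(Z). *)
Definition closed_subscheme (I : S -> Prop) : Prop :=
  [/\ is_ideal I, is_homogeneous I & is_saturated I].

Definition ideal_add (I J : S -> Prop) : S -> Prop :=
  fun p => exists a b, [/\ I a, J b & p = a + b].
Definition ideal_cap (I J : S -> Prop) : S -> Prop := fun p => I p /\ J p.

(* Ideal of Span(Z): generated by the linear forms in I(Z). *)
Definition span_ideal (I : S -> Prop) : S -> Prop :=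
  fun p => exists (k : nat) (g l : 'I_k -> S),
    (forall i, I (l i) /\ l i \is 1.-homog) /\ p = \sum_(i < k) g i * l i.

(* Two homogeneous ideals define the same closed subscheme of P^n iff they
   have the same saturation. *)
Definition same_subscheme (I J : S -> Prop) : Prop := forall p, sat I p <-> sat J p.

(* Linear functionals on S_2 (quadratic forms), represented by their values on
   the degree-2 monomials; [dual2] records that the functional is supported on
   degree-2 monomials. *)
Definition functional := 'X_{1..n.+1} -> R.
Definition dual2 (L : functional) : Prop := forall m, mdeg m != 2%N -> L m = 0.
Definition pair (L : functional) (p : S) : R := \sum_(m <- msupp p) p@_m * L m.

(* Hankel spectrahedron Sigma_Z^* (dual cone of sums of squares of linear forms
   in R[Z]_2), viewed inside S_2^* via the dual of S_2 -> R[Z]_2: the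
   functionals vanishing on I(Z)_2 and nonnegative on sums of squares of
   linear forms. *)
Definition hankel (I : S -> Prop) (L : functional) : Prop :=
  [/\ dual2 L,
      (forall p, I p -> p \is 2.-homog -> pair L p = 0) &
      (forall (k : nat) (l : 'I_k -> S), (forall i, l i \is 1.-homog) ->
          0 <= pair L (\sum_(i < k) l i ^+ 2))].

Definition conv_hull (A : functional -> Prop) : functional -> Prop :=
  fun L => exists (k : nat) (lam : 'I_k -> R) (P : 'I_k -> functional),
    [/\ (forall i, 0 <= lam i), \sum_(i < k) lam i = 1, (forall i, A (P i))
      & forall m, L m = \sum_(i < k) lam i * P i m].

Definition is_convex (A : functional -> Prop) : Prop :=
  forall L1 L2 (t : R), A L1 -> A L2 -> 0 <= t <= 1 ->
    A (fun m => t * L1 m + (1 - t) * L2 m).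

Definition is_face (C F : functional -> Prop) : Prop :=
  [/\ is_convex F, (forall L, F L -> C L) &
      forall L1 L2 (t : R), C L1 -> C L2 -> 0 < t < 1 ->
        F (fun m => t * L1 m + (1 - t) * L2 m) -> F L1 /\ F L2].
End Defs.

(* Main.v *)
Require Import Defs.
From HB Require Import structures.
From mathcomp Require Import all_boot all_order all_algebra.
From mathcomp Require Import reals.
From mathcomp Require Import mpoly ssrcomplements.
From Stdlib Require Import Classical.
From mathcomp Require Import ring lra zify.
Set Implicit Arguments. Unset Strict Implicit. Unset Printing Implicit Defensive.
Import Order.TTheory GRing.Theory Num.Theory.
Local Open Scope ring_scope.
Section Pair.
Variables (R : realType) (n : nat).
Local Notation S := {mpoly R[n.+1]}.
Implicit Types (L : functional R n) (p q : S).

Lemma pairwE L k p : (msize p <= k)%N ->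
  pair L p = \sum_(m : 'X_{1..n.+1 < k}) p@_m * L m.
Proof.
move=> lt_pk; pose I : subFinType _ := 'X_{1..n.+1 < k}.
rewrite /pair (big_mksub I) ?msupp_uniq //=; first last.
  by move=> x /msize_mdeg_lt /leq_trans; apply.
by rewrite big_rmcond //= => j /memN_msupp_eq0 ->; rewrite mul0r.
Qed.

Lemma pair_is_linear L : linear_for *%R (pair L).
Proof.
move=> c p q; set k := (msize p + msize q + msize (c *: p + q))%N.
rewrite (@pairwE _ k) ?(@pairwE _ k p) ?(@pairwE _ k q); first last.
- by rewrite /k leq_addl.
- by rewrite /k -addnA leq_addr.
- by rewrite /k addnAC leq_addl.
rewrite mulr_sumr -big_split /=; apply: eq_bigr => m _.
by rewrite mcoeffD mcoeffZ mulrDl mulrA.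
Qed.

HB.instance Definition _ L := GRing.isSemilinear.Build R S R _ (pair L)
  (GRing.semilinear_linear (pair_is_linear L)).

Lemma pairD L p q : pair L (p + q) = pair L p + pair L q.
Proof. exact: raddfD. Qed.
Lemma pairZ L c p : pair L (c *: p) = c * pair L p.
Proof. exact: linearZ. Qed.

End Pair.
Section Basic.
Variables (R : realType) (n : nat).
Local Notation S := {mpoly R[n.+1]}.
Implicit Types (L : functional R n) (p q u v : S).

Lemma homog1E u : u \is 1.-homog -> u = \sum_(j < n.+1) u@_U_(j) *: 'X_j.
Proof.
move=> hu; apply/mpolyP => m.
rewrite raddf_sum /=.
under eq_bigr => j _ do rewrite mcoeffZ mcoeffX.
have [/mdeg1P [i /eqP ->]|nm] := boolP (mdeg m == 1%N).
  rewrite (bigD1 i) //= eqxx mulr1 big1 ?addr0 // => j /negbTE ji.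
  by rewrite eq_mnm1 ji mulr0.
rewrite (dhomog_nemf_coeff hu) // big1 // => j _.
case: eqP => [e|]; last by rewrite mulr0.
by move: nm; rewrite -e mdeg1.
Qed.

Lemma homog1_coefP u v : u \is 1.-homog -> v \is 1.-homog ->
  (forall j : 'I_n.+1, u@_U_(j) = v@_U_(j)) -> u = v.
Proof.
move=> hu hv e; rewrite (homog1E hu) (homog1E hv).
by apply: eq_bigr => j _; rewrite e.
Qed.

Lemma pair_sum L I (r : seq I) (P : pred I) (F : I -> S) :
  pair L (\sum_(i <- r | P i) F i) = \sum_(i <- r | P i) pair L (F i).
Proof. exact: raddf_sum. Qed.

Definition B L u v := pair L (u * v).

Lemma BC L u v : B L u v = B L v u.
Proof. by rewrite /B mulrC. Qed.

Lemma B_linl L w : linear_for *%R (fun u => B L u w).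
Proof. by move=> c x y; rewrite /B mulrDl -scalerAl pairD pairZ. Qed.

Lemma BDl L u v w : B L (u + v) w = B L u w + B L v w.
Proof. by rewrite /B mulrDl pairD. Qed.
Lemma BDr L u v w : B L w (u + v) = B L w u + B L w v.
Proof. by rewrite /B mulrDr pairD. Qed.
Lemma BZl L c u w : B L (c *: u) w = c * B L u w.
Proof. by rewrite /B -scalerAl pairZ. Qed.
Lemma BZr L c u w : B L w (c *: u) = c * B L w u.
Proof. by rewrite /B -scalerAr pairZ. Qed.
Lemma BNl L u w : B L (- u) w = - B L u w.
Proof. by rewrite -scaleN1r BZl mulN1r. Qed.
Lemma BNr L u w : B L w (- u) = - B L w u.
Proof. by rewrite -scaleN1r BZr mulN1r. Qed.
Lemma BBl L u v w : B L (u - v) w = B L u w - B L v w.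
Proof. by rewrite BDl BNl. Qed.
Lemma BBr L u v w : B L w (u - v) = B L w u - B L w v.
Proof. by rewrite BDr BNr. Qed.
Lemma B0l L w : B L 0 w = 0.
Proof. by rewrite /B mul0r /pair msupp0 big_nil. Qed.
Lemma B0r L w : B L w 0 = 0.
Proof. by rewrite BC B0l. Qed.
Lemma Bsuml L I (r : seq I) (P : pred I) F w :
  B L (\sum_(i <- r | P i) F i) w = \sum_(i <- r | P i) B L (F i) w.
Proof.
elim/big_rec2: _ => [|i x y _ <-]; first exact: B0l.
by rewrite BDl.
Qed.
Lemma Bsumr L I (r : seq I) (P : pred I) F w :
  B L w (\sum_(i <- r | P i) F i) = \sum_(i <- r | P i) B L w (F i).
Proof. by rewrite BC Bsuml; apply: eq_bigr => i _; rewrite BC. Qed.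

Definition psd L := forall u, u \is 1.-homog -> 0 <= B L u u.

Lemma hankel_psd (I : S -> Prop) L : hankel I L -> psd L.
Proof.
case=> _ _ hs u hu; have := hs 1%N (fun _ => u) (fun _ => hu).
by rewrite big_ord1 expr2.
Qed.

Lemma CS L u v : psd L -> u \is 1.-homog -> v \is 1.-homog ->
  B L u u = 0 -> B L u v = 0.
Proof.
move=> hp hu hv h0.
set b := B L u v; set c := B L v v.
have c0 : 0 <= c by exact: hp.
set t := - b / (c + 1).
have := hp (u + t *: v) (rpredD hu (rpredZ _ hv)).
rewrite BDl !BDr !BZl !BZr h0 (BC L v u) -/b -/c add0r.
have c1 : c + 1 != 0 by rewrite lt0r_neq0 // ltr_pwDr.
rewrite /t => H.
have : 0 <= - b ^+ 2 * (c + 2) / (c + 1) ^+ 2.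
  apply: le_trans H _; rewrite le_eqVlt; apply/orP; left; apply/eqP.
  by field.
rewrite pmulr_lge0 ?invr_gt0 ?exprn_gt0 ?ltr_pwDr //.
rewrite mulNr oppr_ge0 pmulr_lle0 ?ltr_pwDr // => hb.
by apply/eqP; rewrite -sqrf_eq0 eq_le hb sqr_ge0.
Qed.

End Basic.
Section Span.
Variables (R : realType) (n : nat).
Local Notation S := {mpoly R[n.+1]}.

Inductive inspan (s : seq S) : S -> Prop :=
 | isp0 : inspan s 0
 | ispE v : v \in s -> inspan s v
 | ispD u v : inspan s u -> inspan s v -> inspan s (u + v)
 | ispZ a u : inspan s u -> inspan s (a *: u).

Lemma inspan_sum s I (r : seq I) (P : pred I) F :
  (forall i, P i -> inspan s (F i)) -> inspan s (\sum_(i <- r | P i) F i).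
Proof.
move=> h; elim/big_rec: _ => [|i x Pi hx]; first exact: isp0.
exact: ispD (h _ Pi) hx.
Qed.

Lemma inspanN s u : inspan s u -> inspan s (- u).
Proof. by move=> h; rewrite -scaleN1r; apply: ispZ. Qed.

Lemma inspanB s u v : inspan s u -> inspan s v -> inspan s (u - v).
Proof. by move=> hu hv; apply: ispD hu (inspanN hv). Qed.

Lemma inspan_trans s t v : (forall x, x \in s -> inspan t x) ->
  inspan s v -> inspan t v.
Proof.
move=> h; elim=> [|x /h //|x y _ hx _ hy|a x _ hx].
- exact: isp0.
- exact: ispD.
- exact: ispZ.
Qed.

Lemma inspan_cons s x v : inspan s v -> inspan (x :: s) v.
Proof. by apply: inspan_trans => y ys; apply: ispE; rewrite inE ys orbT. Qed.

Lemma inspan_pred (P : S -> Prop) s v :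
  P 0 -> (forall x y, P x -> P y -> P (x + y)) -> (forall a x, P x -> P (a *: x)) ->
  (forall x, x \in s -> P x) -> inspan s v -> P v.
Proof. by move=> P0 PD PZ Ps; elim=> //; auto. Qed.

Lemma inspan_cat s1 s2 v : inspan (s1 ++ s2) v ->
  exists a b, [/\ inspan s1 a, inspan s2 b & v = a + b].
Proof.
elim=> [|x|x y _ [a [b [ha hb ->]]] _ [a' [b' [ha' hb' ->]]]|c x _ [a [b [ha hb ->]]]].
- by exists 0, 0; rewrite addr0; split => //; apply: isp0.
- rewrite mem_cat => /orP [xs|xs].
    by exists x, 0; rewrite addr0; split => //; [apply: ispE|apply: isp0].
  by exists 0, x; rewrite add0r; split => //; [apply: isp0|apply: ispE].
- by exists (a + a'), (b + b'); split; [apply: ispD|apply: ispD|rewrite addrACA].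
- by exists (c *: a), (c *: b); split; [apply: ispZ|apply: ispZ|rewrite scalerDr].
Qed.

Variable beta : S -> S -> R.
Hypothesis betaC : forall u v, beta u v = beta v u.
Hypothesis betaDl : forall u v w, beta (u + v) w = beta u w + beta v w.
Hypothesis betaZl : forall a u w, beta (a *: u) w = a * beta u w.
Hypothesis betaCS : forall u v, u \is 1.-homog -> v \is 1.-homog ->
  beta u u = 0 -> beta u v = 0.

Lemma betaDr u v w : beta w (u + v) = beta w u + beta w v.
Proof. by rewrite betaC betaDl !(betaC w). Qed.
Lemma betaZr a u w : beta w (a *: u) = a * beta w u.
Proof. by rewrite betaC betaZl betaC. Qed.
Lemma beta0l w : beta 0 w = 0.
Proof. by rewrite -(scale0r 0) betaZl mul0r. Qed.
Lemma betaNr u w : beta w (- u) = - beta w u.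
Proof. by rewrite -scaleN1r betaZr mulN1r. Qed.
Lemma betaBr u v w : beta w (u - v) = beta w u - beta w v.
Proof. by rewrite betaDr betaNr. Qed.
Lemma betaBl u v w : beta (u - v) w = beta u w - beta v w.
Proof. by rewrite !(betaC _ w) betaBr. Qed.

Lemma beta_span s x y : inspan s x -> (forall e, e \in s -> beta e y = 0) ->
  beta x y = 0.
Proof.
move=> hx h; apply: (@inspan_pred (fun x => beta x y = 0) s) => //.
- exact: beta0l.
- by move=> a b ha hb; rewrite betaDl ha hb addr0.
- by move=> a b hb; rewrite betaZl hb mulr0.
Qed.

Definition proj (E : seq S) u := \sum_(e <- E) (beta u e / beta e e) *: e.

Lemma proj_span E u : inspan E (proj E u).
Proof. by rewrite /proj big_seq; apply: inspan_sum => e eE; apply/ispZ/ispE. Qed.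
Lemma inspan_hom s v : (forall x, x \in s -> x \is 1.-homog) -> inspan s v ->
  v \is 1.-homog.
Proof.
apply: (@inspan_pred (fun x => x \is 1.-homog)).
- exact: dhomog0.
- by move=> x y hx hy; apply: rpredD.
- by move=> a x hx; apply: rpredZ.
Qed.

Fixpoint orth (E : seq S) : Prop :=
  if E is e :: E' then orth E' /\ (forall e', e' \in E' -> beta e e' = 0) else True.

Lemma beta_proj0 E x u : (forall e, e \in E -> beta x e = 0) -> beta x (proj E u) = 0.
Proof.
move=> h; rewrite /proj big_seq.
elim/big_rec: _ => [|e y eE hy]; first by rewrite betaC beta0l.
by rewrite betaDr betaZr h // hy mulr0 addr0.
Qed.

Lemma proj_orth E : orth E -> (forall e, e \in E -> e \is 1.-homog) ->
  forall e0, e0 \in E -> forall u, u \is 1.-homog -> beta e0 (u - proj E u) = 0.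
Proof.
elim: E => [//|e E IH] /= [oE oe] hE e0 + u hu.
have hEe : forall x, x \in E -> x \is 1.-homog.
  by move=> x xE; apply: hE; rewrite inE xE orbT.
rewrite /proj big_cons -/(proj E u) inE => /orP [/eqP ->|e0E].
  rewrite betaBr betaDr betaZr beta_proj0 // addr0.
  have he : e \is 1.-homog by apply: hE; rewrite mem_head.
  have [ee0|ne0] := eqVneq (beta e e) 0.
    by rewrite ee0 invr0 mulr0 subr0; apply: betaCS.
  by rewrite divfK // betaC subrr.
rewrite opprD addrA addrAC betaBr (IH oE hEe e0 e0E u hu) betaZr.
by rewrite (betaC e0 e) (oe e0 e0E) mulr0 subr0.
Qed.

Fixpoint gs (F : seq S) : seq S :=
  if F is f :: F' then (f - proj (gs F') f) :: gs F' else [::].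

Lemma gs_spanE F e : e \in gs F -> inspan F e.
Proof.
elim: F e => [//|f F IH] e /=; rewrite inE => /orP [/eqP ->|eF].
  apply: inspanB; first by apply: ispE; rewrite mem_head.
  apply: inspan_cons; apply: inspan_trans (proj_span _ _) => x /IH //.
by apply: inspan_cons; apply: IH.
Qed.

Lemma gs_hom F : (forall x, x \in F -> x \is 1.-homog) ->
  forall e, e \in gs F -> e \is 1.-homog.
Proof. by move=> h e /gs_spanE; apply: inspan_hom. Qed.

Lemma gs_spanF F f : f \in F -> inspan (gs F) f.
Proof.
elim: F => [//|g F IH] /=; rewrite inE => /orP [/eqP ->|fF].
  suff H : inspan (gs (g :: F)) ((g - proj (gs F) g) + proj (gs F) g).
    by rewrite subrK in H.
  apply: ispD.
    by apply: ispE; rewrite mem_head.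
  by apply: inspan_cons; apply: proj_span.
by apply: inspan_cons; apply: IH.
Qed.

Lemma gs_orth F : (forall x, x \in F -> x \is 1.-homog) -> orth (gs F).
Proof.
elim: F => [//|f F IH] hF /=.
have hF' : forall x, x \in F -> x \is 1.-homog.
  by move=> x xF; apply: hF; rewrite inE xF orbT.
split; first exact: IH.
move=> e' e'E; rewrite betaC; apply: proj_orth => //; first exact: IH.
  exact: gs_hom.
by apply: hF; rewrite mem_head.
Qed.

Lemma proj_lin E : linear (proj E).
Proof.
move=> a u v; rewrite /proj scaler_sumr -big_split /=; apply: eq_bigr => e _.
by rewrite betaDl betaZl mulrDl scalerDl scalerA mulrA.
Qed.

End Span.
Section Spanning.
Variables (R : realType) (n : nat).
Local Notation S := {mpoly R[n.+1]}.

Definition vecp (u : S) : 'rV[R]_(n.+1) := \row_j u@_U_(j).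
Definition mxF (F : seq S) : 'M[R]_(size F, n.+1) := \matrix_(i, j) (F`_i)@_U_(j).

Lemma mxF_cons w F : mxF (w :: F) = col_mx (vecp w) (mxF F).
Proof.
apply/matrixP => i j; rewrite !mxE.
by case: splitP => k /= ->; rewrite !mxE // ord1.
Qed.

Lemma span_exists (W : S -> Prop) : W 0 ->
  (forall x y, W x -> W y -> W (x + y)) -> (forall a x, W x -> W (a *: x)) ->
  (forall w, W w -> w \is 1.-homog) ->
  exists F : seq S, (forall f, f \in F -> W f) /\ forall w, W w -> inspan F w.
Proof.
move=> W0 WD WZ Wh.
suff: forall d F, (forall f, f \in F -> W f) -> (n.+1 - \rank (mxF F) < d)%N ->
  exists F : seq S, (forall f, f \in F -> W f) /\ forall w, W w -> inspan F w.
  by move=> /(_ n.+2 [::]); apply => //; rewrite ltnS leq_subr.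
elim=> [//|d IH] F WF hd.
have [all|] := classic (forall w, W w -> (vecp w <= mxF F)%MS).
  exists F; split => // w Ww; have /submxP [D hD] := all w Ww.
  have -> : w = \sum_(i < size F) D 0 i *: F`_i.
    apply: homog1_coefP; first exact: Wh.
      apply: rpred_sum => i _; apply: rpredZ; apply: Wh; apply: WF.
      exact: mem_nth.
    move=> j; have := congr1 (fun M : 'rV[R]_(n.+1) => M 0 j) hD; rewrite !mxE => ->.
    rewrite raddf_sum /=; apply: eq_bigr => i _.
    by rewrite mcoeffZ mxE.
  by apply: inspan_sum => i _; apply/ispZ/ispE/mem_nth.
move=> /not_all_ex_not [w hw].
have [Ww nw] : W w /\ ~ (vecp w <= mxF F)%MS.
  split; first by apply: NNPP => h; apply: hw => /h.
  by move=> h; apply: hw => _.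
have nsub : ~~ (vecp w <= mxF F)%MS by apply/negP.
apply: (IH (w :: F)).
  by move=> f; rewrite inE => /orP [/eqP ->|/WF].
have lt : (\rank (mxF F) < \rank (mxF (w :: F)))%N.
  apply: rank_ltmx; rewrite ltmxE mxF_cons.
  have := submx_refl (col_mx (vecp w) (mxF F)); rewrite col_mx_sub => /andP [_ ->].
  by rewrite /= (col_mx_sub (vecp w) (mxF F)) negb_and nsub.
have := rank_leq_col (mxF (w :: F)).
move: hd lt; set a := \rank _; set b := \rank _; move=> *; lia.
Qed.

End Spanning.
Section Taylor.
Variables (R : realType) (n : nat).
Local Notation S := {mpoly R[n.+1]}.
Variables (s s' : n.+1.-tuple S).

Definition TP (p : S) := exists g : 'I_n.+1 -> S,
  (p \mPo s) - (p \mPo s') = \sum_i g i * (tnth s i - tnth s' i).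

Lemma TP0 : TP 0.
Proof. by exists (fun _ => 0); rewrite (comp_mpoly0 s) (comp_mpoly0 s') subrr big1 // => i _; rewrite mul0r. Qed.

Lemma TPD p q : TP p -> TP q -> TP (p + q).
Proof.
move=> [g hg] [h hh]; exists (fun i => g i + h i).
rewrite (comp_mpolyD s) (comp_mpolyD s').
have -> : (p \mPo s) + (q \mPo s) - ((p \mPo s') + (q \mPo s')) =
   ((p \mPo s) - (p \mPo s')) + ((q \mPo s) - (q \mPo s')) by ring.
rewrite hg hh -big_split /=; apply: eq_bigr => i _; by rewrite mulrDl.
Qed.

Lemma TPZ c p : TP p -> TP (c *: p).
Proof.
move=> [g hg]; exists (fun i => c *: g i).
rewrite (comp_mpolyZ c p s) (comp_mpolyZ c p s') -scalerBr hg scaler_sumr; apply: eq_bigr => i _.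
by rewrite scalerAl.
Qed.

Lemma TPM p q : TP p -> TP q -> TP (p * q).
Proof.
move=> [g hg] [h hh].
exists (fun i => g i * (q \mPo s) + (p \mPo s') * h i).
rewrite !rmorphM /=.
have -> : (p \mPo s) * (q \mPo s) - (p \mPo s') * (q \mPo s') =
  ((p \mPo s) - (p \mPo s')) * (q \mPo s) + (p \mPo s') * ((q \mPo s) - (q \mPo s')).
  by ring.
rewrite hg hh mulr_suml mulr_sumr -big_split /=; apply: eq_bigr => i _.
rewrite mulrDl; congr (_ + _); first by rewrite mulrAC.
by rewrite mulrA.
Qed.

Lemma TP1 : TP 1.
Proof. by exists (fun _ => 0); rewrite (comp_mpoly1 s) (comp_mpoly1 s') subrr big1 // => i _; rewrite mul0r. Qed.

Lemma TPX i : TP 'X_i.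
Proof.
exists (fun j => (j == i)%:R); rewrite !comp_mpolyXU.
rewrite (bigD1 i) //= eqxx mul1r big1 ?addr0 ?(tnth_nth 0) // => j /negbTE ->.
by rewrite mul0r.
Qed.

Lemma TPall p : TP p.
Proof.
rewrite [p]mpolyE; apply: big_ind => //; first exact: TP0; first exact: TPD.
move=> m _; apply: TPZ; rewrite mpolyXE_id.
apply: big_ind => //; first exact: TP1; first exact: TPM.
move=> i _; elim: (m i) => [|k IH]; first by rewrite expr0; apply: TP1.
by rewrite exprS; apply: TPM => //; apply: TPX.
Qed.

End Taylor.

Section Homog.
Variables (R : realType) (n : nat).
Local Notation S := {mpoly R[n.+1]}.

Lemma pihomogM1 d (g w : S) : w \is 1.-homog ->
  pihomog mdeg d.+1 (g * w) = pihomog mdeg d g * w.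
Proof.
move=> hw; set k := (msize g + d.+1)%N.
rewrite {1}(@pihomog_partitionE _ _ mdeg k g) ?leq_addr // mulr_suml raddf_sum /=.
have dk : (d < k)%N by rewrite /k; lia.
rewrite (bigD1 (Ordinal dk)) //= big1 ?addr0.
  by have := dhomogM (pihomogP mdeg d g) hw; rewrite addn1 => h; rewrite pihomog_dE.
move=> e /= ne; apply: (@pihomog_ne0 _ _ mdeg (e + 1)%N).
  by rewrite addn1 eqSS; apply: contra ne => /eqP h; apply/eqP/val_inj.
exact: dhomogM (pihomogP mdeg e g) hw.
Qed.

Definition betaE (u v : S) := \sum_(j < n.+1) u@_U_(j) * v@_U_(j).

Lemma betaEC u v : betaE u v = betaE v u.
Proof. by apply: eq_bigr => j _; rewrite mulrC. Qed.
Lemma betaEDl u v w : betaE (u + v) w = betaE u w + betaE v w.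
Proof. by rewrite /betaE -big_split; apply: eq_bigr => j _; rewrite mcoeffD mulrDl. Qed.
Lemma betaEZl a u w : betaE (a *: u) w = a * betaE u w.
Proof. by rewrite /betaE mulr_sumr; apply: eq_bigr => j _; rewrite mcoeffZ mulrA. Qed.

Lemma betaE_def u : u \is 1.-homog -> betaE u u = 0 -> u = 0.
Proof.
move=> hu /eqP; rewrite psumr_eq0 => [/allP h|j _]; last by rewrite -expr2 sqr_ge0.
apply: homog1_coefP => // [|j]; first exact: dhomog0.
have /h : j \in index_enum 'I_n.+1 by rewrite mem_index_enum.
by rewrite /= mulf_eq0 orbb mcoeff0 => /eqP.
Qed.

Lemma betaECS u v : u \is 1.-homog -> v \is 1.-homog -> betaE u u = 0 -> betaE u v = 0.
Proof.
move=> hu _ /(betaE_def hu) ->; rewrite /betaE big1 // => j _.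
by rewrite mcoeff0 mul0r.
Qed.

End Homog.
Section Pack.
Variables (R : realType) (n : nat).
Local Notation S := {mpoly R[n.+1]}.
Variable beta : S -> S -> R.
Hypothesis betaC : forall u v, beta u v = beta v u.
Hypothesis betaDl : forall u v w, beta (u + v) w = beta u w + beta v w.
Hypothesis betaZl : forall a u w, beta (a *: u) w = a * beta u w.
Hypothesis betaCS : forall u v, u \is 1.-homog -> v \is 1.-homog ->
  beta u u = 0 -> beta u v = 0.

Lemma proj_pack (F : seq S) : (forall x, x \in F -> x \is 1.-homog) ->
  exists P : S -> S, [/\ (forall u, inspan F (P u)),
    (forall u, u \is 1.-homog -> P u \is 1.-homog),
    (forall w u, inspan F w -> u \is 1.-homog -> beta w (u - P u) = 0),
    (forall u, (forall f, f \in F -> beta u f = 0) -> P u = 0) &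
    (forall a u v, P (a *: u + v) = a *: P u + P v)].
Proof.
move=> Fh; exists (proj beta (gs beta F)); split.
- move=> u; apply: inspan_trans (proj_span _ _ _) => x; exact: gs_spanE.
- move=> u _; apply: inspan_hom Fh _.
  apply: inspan_trans (proj_span _ _ _) => x; exact: gs_spanE.
- move=> w u hw hu; apply: (beta_span betaDl betaZl (s := gs beta F)).
    by apply: inspan_trans hw => x; apply: gs_spanF.
  move=> e eE; apply: (proj_orth betaC betaDl betaZl betaCS) => //.
    exact: (gs_orth betaC betaDl betaZl betaCS).
  by move=> x; apply: gs_hom.
- move=> u h; rewrite /proj; apply: big1_seq => e /andP [_ eE].
  have h0 : beta e u = 0.
    apply: (beta_span betaDl betaZl (gs_spanE eE)).
    by move=> f fF; rewrite betaC h.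
  by rewrite betaC h0 mul0r scale0r.
- by move=> a u v; apply: (proj_lin betaDl betaZl).
Qed.

End Pack.
Section Ideals.
Variables (R : realType) (n : nat).
Local Notation S := {mpoly R[n.+1]}.

Lemma idealZ (I : S -> Prop) : is_ideal I -> forall a x, I x -> I (a *: x).
Proof. by case=> _ _ hm a x hx; rewrite -mul_mpolyC; apply: hm. Qed.
Lemma idealMr (I : S -> Prop) : is_ideal I -> forall x y, I x -> I (x * y).
Proof. by case=> _ _ hm x y hx; rewrite mulrC; apply: hm. Qed.
Lemma idealMl (I : S -> Prop) : is_ideal I -> forall x y, I y -> I (x * y).
Proof. by case=> _ _ hm x y hx; apply: hm. Qed.
Lemma idealD (I : S -> Prop) : is_ideal I -> forall x y, I x -> I y -> I (x + y).
Proof. by case. Qed.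
Lemma ideal0 (I : S -> Prop) : is_ideal I -> I 0.
Proof. by case. Qed.
Lemma idealN (I : S -> Prop) : is_ideal I -> forall x, I x -> I (- x).
Proof. by move=> hI x hx; rewrite -scaleN1r; apply: idealZ. Qed.
Lemma idealB (I : S -> Prop) : is_ideal I -> forall x y, I x -> I y -> I (x - y).
Proof. by move=> hI x y hx hy; apply: idealD => //; apply: idealN. Qed.
Lemma ideal_sum (I : S -> Prop) : is_ideal I -> forall k (F : 'I_k -> S),
  (forall i, I (F i)) -> I (\sum_i F i).
Proof.
move=> hI k F h; elim/big_rec: _ => [|i x _ hx]; first exact: ideal0.
by apply: idealD.
Qed.

Definition Wset (I : S -> Prop) (u : S) := u \is 1.-homog /\ I u.

Lemma inspan_W (I : S -> Prop) s w : is_ideal I -> (forall f, f \in s -> Wset I f) ->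
  inspan s w -> Wset I w.
Proof.
move=> hI; apply: inspan_pred.
- by split; [apply: dhomog0|apply: ideal0].
- by move=> x y [hx Ix] [hy Iy]; split; [apply: rpredD|apply: idealD].
- by move=> a x [hx Ix]; split; [apply: rpredZ|apply: idealZ].
Qed.

Lemma W_span (I : S -> Prop) : is_ideal I ->
  exists F, (forall f, f \in F -> Wset I f) /\ forall w, Wset I w -> inspan F w.
Proof.
move=> hI; apply: span_exists.
- by split; [apply: dhomog0|apply: ideal0].
- by move=> x y [hx Ix] [hy Iy]; split; [apply: rpredD|apply: idealD].
- by move=> a x [hx Ix]; split; [apply: rpredZ|apply: idealZ].
- by move=> w [].
Qed.

Lemma comp_hom1 (t : n.+1.-tuple S) u : u \is 1.-homog ->
  u \mPo t = \sum_j u@_U_(j) *: tnth t j.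
Proof.
move=> hu; rewrite {1}(homog1E hu) raddf_sum; apply: eq_bigr => j _.
by apply: (etrans (comp_mpolyZ _ _ t)); rewrite comp_mpolyXU (tnth_nth 0).
Qed.

Lemma comp_sum (t : n.+1.-tuple S) I (r : seq I) (P : pred I) (F : I -> S) :
  comp_mpoly t (\sum_(i <- r | P i) F i) = \sum_(i <- r | P i) comp_mpoly t (F i).
Proof. exact: raddf_sum. Qed.
Lemma compM (t : n.+1.-tuple S) p q : comp_mpoly t (p * q) = comp_mpoly t p * comp_mpoly t q.
Proof. exact: rmorphM. Qed.
Lemma compD (t : n.+1.-tuple S) p q : comp_mpoly t (p + q) = comp_mpoly t p + comp_mpoly t q.
Proof. exact: raddfD. Qed.

End Ideals.
Section Decomp.
Variables (R : realType) (n : nat).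
Local Notation S := {mpoly R[n.+1]}.
Variables (IX IY : S -> Prop).
Hypothesis iX : is_ideal IX.
Hypothesis iY : is_ideal IY.
Hypothesis hS : same_subscheme (ideal_add IX IY) (ideal_add (span_ideal IX) (span_ideal IY)).

Lemma decomp q : q \is 2.-homog -> ideal_add IX IY q ->
  exists h a b : 'I_n.+1 -> S, [/\ (forall i, h i \is 1.-homog),
    (forall i, Wset IX (a i)), (forall i, Wset IY (b i)) &
    q = \sum_i h i * (a i + b i)].
Proof.
move=> hq qI.
have [FI [FIW FIsp]] := W_span iX.
have [FJ [FJW FJsp]] := W_span iY.
pose F := FI ++ FJ.
have Fh : forall x, x \in F -> x \is 1.-homog.
  by move=> x; rewrite mem_cat => /orP [/FIW []|/FJW []].
have [Q [Qsp Qh Qorth Q0 Qlin]] :=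
  proj_pack (@betaEC R n) (@betaEDl R n) (@betaEZl R n) (@betaECS R n) Fh.
have Q00 : Q 0 = 0.
  by apply: Q0 => f _; rewrite /betaE big1 // => j _; rewrite mcoeff0 mul0r.
have Qsum : forall (c : 'I_n.+1 -> R) (x : 'I_n.+1 -> S),
    Q (\sum_j c j *: x j) = \sum_j c j *: Q (x j).
  move=> c x; elim/big_rec2: _ => [//|j y z _ <-].
  by rewrite Qlin.
pose t := [tuple 'X_i - Q 'X_i | i < n.+1].
have tE : forall i, tnth t i = 'X_i - Q 'X_i.
  by move=> i; rewrite tnth_map tnth_ord_tuple.
have compt : forall u, u \is 1.-homog -> u \mPo t = u - Q u.
  move=> u hu; rewrite comp_hom1 //.
  under eq_bigr do rewrite tE scalerBr.
  by rewrite sumrB -homog1E // -Qsum -homog1E.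
have kill : forall w, inspan F w -> w \is 1.-homog -> w \mPo t = 0.
  move=> w hw hwh; rewrite compt //; apply: betaE_def.
    by apply: rpredB => //; apply: Qh.
  rewrite (betaBl (@betaEC R n) (@betaEDl R n) (@betaEZl R n)) Qorth //.
  by rewrite Qorth // subr0.
have killI : forall x, span_ideal IX x -> x \mPo t = 0.
  move=> x [k [g [l [hl ->]]]]; rewrite comp_sum big1 // => i _.
  have [Il hl1] := hl i.
  rewrite compM (kill (l i)) ?mulr0 //.
  apply: (inspan_trans _ (FIsp _ (conj hl1 Il))) => y yF.
  by apply: ispE; rewrite mem_cat yF.
have killJ : forall x, span_ideal IY x -> x \mPo t = 0.
  move=> x [k [g [l [hl ->]]]]; rewrite comp_sum big1 // => i _.
  have [Il hl1] := hl i.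
  rewrite compM (kill (l i)) ?mulr0 //.
  apply: (inspan_trans _ (FJsp _ (conj hl1 Il))) => y yF.
  by apply: ispE; rewrite mem_cat yF orbT.
have [k Hk] : sat (ideal_add (span_ideal IX) (span_ideal IY)) q.
  apply/hS; exists 0%N => m /eqP; rewrite mdeg_eq0 => /eqP ->.
  by rewrite mpolyX0 mul1r.
have qt : q \mPo t = 0.
  have [[j tj]|allz] := classic (exists j, tnth t j != 0).
    have := Hk (U_(j) *+ k)%MM; rewrite mdegMn mdeg1 mul1n => /(_ erefl).
    move=> [a [b [ha hb e]]]; have := congr1 (comp_mpoly t) e.
    rewrite compM compD (killI a ha) (killJ b hb) addr0 comp_mpolyX.
    rewrite (bigD1 j) //= big1 ?mulr1; last first.
      by move=> i ne; rewrite mulmnE mnm1E eq_sym (negbTE ne) mul0n expr0.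
    move=> /eqP; rewrite mulf_eq0 expf_eq0 (negbTE tj) andbF /= => /eqP.
    by [].
  have z : forall j0, tnth t j0 = 0.
    by move=> j0; apply/eqP; apply: NNPP => h; apply: allz; exists j0; apply/negP.
  rewrite comp_mpolyE big_seq big1 // => m mq.
  under eq_bigr do rewrite z.
  rewrite prodrXr -mdegE (dhomog_mf hq mq) expr0n /= scaler0 //.
have [g hg] := TPall [tuple 'X_i | i < n.+1] t q.
rewrite comp_mpoly_id qt subr0 in hg.
have dif : forall i, tnth [tuple 'X_i | i < n.+1] i - tnth t i = Q 'X_i.
  by move=> i; rewrite tE tnth_map tnth_ord_tuple opprB addrC subrK.
have X1 : forall i : 'I_n.+1, ('X_i : S) \is 1.-homog.
  by move=> i; apply/dhomogP => m /mem_msuppXP <-; exact: mdeg1.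
have : forall i, exists ab : S * S,
    [/\ Wset IX ab.1, Wset IY ab.2 & Q 'X_i = ab.1 + ab.2].
  move=> i; have := Qsp 'X_i; rewrite /F => /inspan_cat [a [b [ha hb ->]]].
  by exists (a, b); split => //; [apply: (inspan_W iX FIW)|apply: (inspan_W iY FJW)].
case/fin_all_exists => ab hab.
exists (fun i => pihomog mdeg 1 (g i)), (fun i => (ab i).1), (fun i => (ab i).2).
split.
- by move=> i; apply: pihomogP.
- by move=> i; have [] := hab i.
- by move=> i; have [] := hab i.
rewrite -(pihomog_dE hq) hg raddf_sum /=; apply: eq_bigr => i _.
have [_ _ <-] := hab i.
by rewrite dif pihomogM1 // Qh.
Qed.

End Decomp.
Section Hankel.
Variables (R : realType) (n : nat).
Local Notation S := {mpoly R[n.+1]}.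
Implicit Types (L : functional R n).

Lemma pair_comb a b L1 L2 p :
  pair (fun m => a * L1 m + b * L2 m) p = a * pair L1 p + b * pair L2 p.
Proof.
rewrite /pair !mulr_sumr -big_split /=; apply: eq_bigr => m _.
by ring.
Qed.

Lemma pair_sumL k (lam : 'I_k -> R) (P : 'I_k -> functional R n) L p :
  (forall m, L m = \sum_(i < k) lam i * P i m) ->
  pair L p = \sum_(i < k) lam i * pair (P i) p.
Proof.
move=> hL; rewrite /pair; under eq_bigr do rewrite hL mulr_sumr.
rewrite exchange_big /=; apply: eq_bigr => i _; rewrite mulr_sumr.
by apply: eq_bigr => m _; rewrite mulrCA.
Qed.

Lemma pair_ext L1 L2 p : (forall m, L1 m = L2 m) -> pair L1 p = pair L2 p.
Proof. by move=> h; rewrite /pair; apply: eq_bigr => m _; rewrite h. Qed.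

Lemma hankel_capl (I J : S -> Prop) L : hankel I L -> hankel (ideal_cap I J) L.
Proof. by case=> h1 h2 h3; split => // p [Ip _]; apply: h2. Qed.
Lemma hankel_capr (I J : S -> Prop) L : hankel J L -> hankel (ideal_cap I J) L.
Proof. by case=> h1 h2 h3; split => // p [_ Jp]; apply: h2. Qed.

Lemma hankel_scale (I : S -> Prop) c L : 0 <= c -> hankel I L ->
  hankel I (fun m => c * L m).
Proof.
move=> c0 [h1 h2 h3]; split.
- by move=> m /h1 ->; rewrite mulr0.
- move=> p Ip hp; rewrite (@pair_ext _ (fun m => c * L m + 0 * L m)).
    by rewrite pair_comb h2 // !mulr0 addr0.
  by move=> m; rewrite mul0r addr0.
- move=> k l hl; rewrite (@pair_ext _ (fun m => c * L m + 0 * L m)).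
    by rewrite pair_comb mul0r addr0 mulr_ge0 // h3.
  by move=> m; rewrite mul0r addr0.
Qed.

Lemma hankel_convex (I : S -> Prop) : is_convex (hankel I).
Proof.
move=> L1 L2 t [a1 a2 a3] [b1 b2 b3] /andP [t0 t1]; split.
- by move=> m hm; rewrite a1 // b1 // !mulr0 addr0.
- by move=> p Ip hp; rewrite pair_comb a2 // b2 // !mulr0 addr0.
- move=> k l hl; rewrite pair_comb addr_ge0 // mulr_ge0 ?a3 ?b3 //.
  by rewrite subr_ge0.
Qed.

Lemma conv_hankel (I J : S -> Prop) L :
  conv_hull (fun L' => hankel I L' \/ hankel J L') L -> hankel (ideal_cap I J) L.
Proof.
move=> [k [lam [P [l0 l1 hP hL]]]].
have hP' : forall i, hankel (ideal_cap I J) (P i).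
  by move=> i; case: (hP i); [apply: hankel_capl|apply: hankel_capr].
split.
- move=> m hm; rewrite hL big1 // => i _.
  by have [-> // _ _] := hP' i; rewrite mulr0.
- move=> p Ip hp; rewrite (pair_sumL p hL) big1 // => i _.
  by have [_ -> // _] := hP' i; rewrite mulr0.
- move=> r l hl; rewrite (pair_sumL _ hL) sumr_ge0 // => i _.
  by have [_ _ h] := hP' i; rewrite mulr_ge0 ?h.
Qed.

End Hankel.
Section Final.
Variables (R : realType) (n : nat).
Local Notation S := {mpoly R[n.+1]}.
Implicit Types (L : functional R n).

Lemma hankel_ext (I : S -> Prop) L1 L2 : (forall m, L1 m = L2 m) -> hankel I L1 -> hankel I L2.
Proof.
move=> e [h1 h2 h3]; split.
- by move=> m hm; rewrite -e h1.
- by move=> p Ip hp; rewrite -(pair_ext _ e) h2.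
- by move=> k l hl; rewrite -(pair_ext _ e) h3.
Qed.

Lemma rest_cap (I J : S -> Prop) q (h a b : 'I_n.+1 -> S) :
  is_ideal I -> is_ideal J -> I q ->
  (forall i, h i \is 1.-homog) -> (forall i, Wset I (a i)) -> (forall i, Wset J (b i)) ->
  q = \sum_i h i * (a i + b i) ->
  ideal_cap I J (\sum_i h i * b i) /\ (\sum_i h i * b i) \is 2.-homog.
Proof.
move=> hI hJ Iq hh ha hb e.
have eq2 : q = \sum_i h i * a i + \sum_i h i * b i.
  by rewrite e -big_split; apply: eq_bigr => i _; rewrite mulrDr.
have Jb : J (\sum_i h i * b i).
  by apply: ideal_sum => // i; apply: idealMl => //; have [] := hb i.
have Hb : (\sum_i h i * b i) \is 2.-homog.
  apply: rpred_sum => i _; have [hbi _] := hb i.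
  exact: (dhomogM (hh i) hbi).
have e3 : \sum_i h i * b i = q - \sum_i h i * a i.
  by rewrite {1}eq2 addrAC subrr add0r.
split => //; split => //.
rewrite e3; apply: idealB => //; apply: ideal_sum => // i; apply: idealMl => //.
by have [] := ha i.
Qed.

Lemma face_gen (I J : S -> Prop) : is_ideal I -> is_ideal J ->
  (forall q, q \is 2.-homog -> I q -> exists h a b : 'I_n.+1 -> S,
     [/\ (forall i, h i \is 1.-homog), (forall i, Wset I (a i)), (forall i, Wset J (b i)) &
      q = \sum_i h i * (a i + b i)]) ->
  forall L1 L2 (t : R), hankel (ideal_cap I J) L1 -> hankel (ideal_cap I J) L2 ->
  0 < t < 1 -> hankel I (fun m => t * L1 m + (1 - t) * L2 m) -> hankel I L1.
Proof.
move=> hI hJ dec L1 L2 t H1 H2 /andP [t0 t1] Hc.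
have [d1 k1 s1] := H1; have [_ _ s2] := H2; have [_ kc _] := Hc.
have p1 := hankel_psd H1; have p2 := hankel_psd H2.
split => // q Iq hq.
have [h [a [b [hh ha hb e]]]] := dec q hq Iq.
have [cap hom] := rest_cap hI hJ Iq hh ha hb e.
have -> : q = \sum_i h i * a i + \sum_i h i * b i.
  by rewrite e -big_split; apply: eq_bigr => i _; rewrite mulrDr.
rewrite pairD (k1 _ cap hom) addr0 raddf_sum big1 // => i _.
have [hai Iai] := ha i.
have Baa : B L1 (a i) (a i) = 0.
  have := kc (a i * a i) (@idealMl _ _ I hI (a i) (a i) Iai) (dhomogM hai hai).
  rewrite pair_comb -/(B L1 (a i) (a i)) -/(B L2 (a i) (a i)) => hs.
  have u1 := p1 _ hai; have u2 := p2 _ hai.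
  have t1' : 0 < 1 - t by rewrite subr_gt0.
  have : t * B L1 (a i) (a i) = 0.
    have m1 : 0 <= t * B L1 (a i) (a i) by rewrite mulr_ge0 // ltW.
    have m2 : 0 <= (1 - t) * B L2 (a i) (a i) by rewrite mulr_ge0 // ltW.
    move: m1 m2 hs; set x := t * _; set y := (1 - t) * _ => m1 m2 hs; lra.
  by move/eqP; rewrite mulf_eq0 (gt_eqF t0) /= => /eqP.
by change (B L1 (h i) (a i) = 0); rewrite BC (CS p1 hai (hh i) Baa).
Qed.

End Final.
Section Split.
Variables (R : realType) (n : nat).
Local Notation S := {mpoly R[n.+1]}.
Variables (IX IY : S -> Prop).
Hypothesis iX : is_ideal IX.
Hypothesis iY : is_ideal IY.
Hypothesis hS : same_subscheme (ideal_add IX IY) (ideal_add (span_ideal IX) (span_ideal IY)).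

Lemma split_hankel (L : functional R n) : hankel (ideal_cap IX IY) L ->
  exists LX LY, [/\ hankel IX LX, hankel IY LY & forall m, L m = LX m + LY m].
Proof.
move=> hL; have psdL := hankel_psd hL; have [dL kL sL] := hL.
have [FJ [FJW FJsp]] := W_span iY.
have FJh : forall x, x \in FJ -> x \is 1.-homog by move=> x /FJW [].
have [P [Psp Ph Porth P0 Plin]] :=
  proj_pack (@BC R n L) (@BDl R n L) (@BZl R n L) (fun u v hu hv h => CS psdL hu hv h) FJh.
have P00 : P 0 = 0 by apply: P0 => f _; rewrite B0l.
have Psum : forall (c : 'I_n.+1 -> R) (x : 'I_n.+1 -> S),
    P (\sum_j c j *: x j) = \sum_j c j *: P (x j).
  by move=> c x; elim/big_rec2: _ => [//|j y z _ <-]; rewrite Plin.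
pose t := [tuple P 'X_i | i < n.+1].
have compt : forall u, u \is 1.-homog -> u \mPo t = P u.
  move=> u hu; rewrite comp_hom1 //.
  under eq_bigr do rewrite tnth_map tnth_ord_tuple.
  by rewrite -Psum -homog1E.
pose LX : functional R n := fun m => if mdeg m == 2%N then pair L ('X_[m] \mPo t) else 0.
have pLX : forall p, p \is 2.-homog -> pair LX p = pair L (p \mPo t).
  move=> p hp.
  have -> : pair LX p = \sum_(m <- msupp p) p@_m * LX m by [].
  rewrite comp_mpolyEX raddf_sum big_seq [RHS]big_seq; apply: eq_bigr => m mp.
  by rewrite /LX (dhomog_mf hp mp) eqxx; symmetry; apply: pairZ.
have LXB : forall u v, u \is 1.-homog -> v \is 1.-homog ->
    pair LX (u * v) = B L (P u) (P v).
  move=> u v hu hv; rewrite pLX; last exact: (dhomogM hu hv).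
  by rewrite compM !compt.
have Pa : forall a, Wset IX a -> P a = 0.
  move=> a [ha Ia]; apply: P0 => f fF; have [hf If] := FJW f fF.
  apply: kL; first by split; [apply: idealMr|apply: idealMl].
  exact: (dhomogM ha hf).
have key : forall h b, h \is 1.-homog -> Wset IY b -> B L (P h) (P b) = B L h b.
  move=> h b hh hb.
  have e1 := Porth (P h) b (Psp h) (proj1 hb).
  have e2 := Porth b h (FJsp _ hb) hh.
  rewrite BBr in e1; rewrite BBr in e2.
  rewrite (BC L (P h) b) in e1; rewrite (BC L h b).
  move: e1 e2; set x := B L b (P h); set y := B L (P h) (P b); set z := B L b h.
  move=> e1 e2; lra.
have LXdec : forall q (h a b : 'I_n.+1 -> S), q \is 2.-homog ->
    (forall i, h i \is 1.-homog) -> (forall i, Wset IX (a i)) -> (forall i, Wset IY (b i)) ->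
    q = \sum_i h i * (a i + b i) -> pair LX q = \sum_i B L (h i) (b i).
  move=> q h a b hq hh ha hb e; rewrite pLX // e comp_sum raddf_sum.
  apply: eq_bigr => i _; have [ha1 _] := ha i; have [hb1 _] := hb i.
  rewrite compM compD (compt _ (hh i)) (compt _ ha1) (compt _ hb1) (Pa _ (ha i)) add0r.
  exact: key.
pose LY : functional R n := fun m => L m - LX m.
have pLY : forall p, pair LY p = pair L p - pair LX p.
  move=> p; have -> : pair LY p = pair (fun m => 1 * L m + (-1) * LX m) p.
    by apply: pair_ext => m; rewrite mul1r mulN1r.
  by rewrite pair_comb mul1r mulN1r.
exists LX, LY; split; last by move=> m; rewrite /LY addrC subrK.
- split.
  + by move=> m hm; rewrite /LX (negbTE hm).
  + move=> q Iq hq.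
    have [h [a [b [hh ha hb e]]]] := decomp iX iY hS hq (ex_intro _ q (ex_intro _ 0
      (And3 Iq (ideal0 iY) (esym (addr0 q))))).
    rewrite (LXdec q h a b) //.
    have [cap hom] := rest_cap iX iY Iq hh ha hb e.
    by move: (kL _ cap hom); rewrite raddf_sum => H; exact: H.
  + move=> k l hl; rewrite pair_sum sumr_ge0 // => i _.
    by rewrite expr2 LXB // psdL // Ph.
- split.
  + by move=> m hm; rewrite /LY /LX (negbTE hm) dL // subr0.
  + move=> q Iq hq.
    have [h [a [b [hh ha hb e]]]] := decomp iX iY hS hq (ex_intro _ 0 (ex_intro _ q
      (And3 (ideal0 iX) Iq (esym (add0r q))))).
    rewrite pLY (LXdec q h a b) //.
    have e' : q = \sum_i h i * (b i + a i).
      by rewrite e; apply: eq_bigr => i _; rewrite addrC.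
    have [[capY capX] hom] := rest_cap iY iX Iq hh hb ha e'.
    apply: etrans (kL _ (conj capX capY) hom).
    rewrite {1}e !pair_sum -sumrB.
    apply: eq_bigr => i _; rewrite mulrDr pairD.
    by rewrite [pair L (h i * b i)]/(B L (h i) (b i)) -/(B L _ _) addrK.
  + move=> k l hl; rewrite pLY !pair_sum -sumrB sumr_ge0 // => i _.
    rewrite expr2 LXB //.
    set u := l i; have hu := hl i.
    have o : B L (P u) (u - P u) = 0 := Porth (P u) u (Psp u) hu.
    have pos := psdL (u - P u) (rpredB hu (Ph u hu)).
    rewrite !(BBl, BBr) in pos; rewrite BBr in o.
    rewrite -/(B L u u); move: pos o; rewrite (BC L u (P u)).
    set x := B L u u; set y := B L (P u) (P u); set z := B L (P u) u.
    move=> pos o; lra.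
Qed.

End Split.
Theorem corollary5p4 (R : realType) (n : nat) (IX IY : {mpoly R[n.+1]} -> Prop) :
  closed_subscheme IX -> closed_subscheme IY ->
  same_subscheme (ideal_add IX IY) (ideal_add (span_ideal IX) (span_ideal IY)) ->
  [/\ (forall L, hankel (ideal_cap IX IY) L <->
                 conv_hull (fun L' => hankel IX L' \/ hankel IY L') L),
      is_face (hankel (ideal_cap IX IY)) (hankel IX)
    & is_face (hankel (ideal_cap IX IY)) (hankel IY)].
Proof.
move=> [iX _ _] [iY _ _] hS.
have decX : forall q, q \is 2.-homog -> IX q -> exists h a b : 'I_n.+1 -> {mpoly R[n.+1]},
     [/\ (forall i, h i \is 1.-homog), (forall i, Wset IX (a i)), (forall i, Wset IY (b i)) &
      q = \sum_i h i * (a i + b i)].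
  move=> q hq Iq; apply: (decomp iX iY hS hq).
  by exists q, 0; split => //; [apply: ideal0|rewrite addr0].
have decY : forall q, q \is 2.-homog -> IY q -> exists h a b : 'I_n.+1 -> {mpoly R[n.+1]},
     [/\ (forall i, h i \is 1.-homog), (forall i, Wset IY (a i)), (forall i, Wset IX (b i)) &
      q = \sum_i h i * (a i + b i)].
  move=> q hq Iq.
  have [h [a [b [hh ha hb e]]]] : exists h a b : 'I_n.+1 -> {mpoly R[n.+1]},
     [/\ (forall i, h i \is 1.-homog), (forall i, Wset IX (a i)), (forall i, Wset IY (b i)) &
      q = \sum_i h i * (a i + b i)].
    apply: (decomp iX iY hS hq).
    by exists 0, q; split => //; [apply: ideal0|rewrite add0r].
  exists h, b, a; split => //.
  by rewrite e; apply: eq_bigr => i _; rewrite addrC.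
have capC : forall L, hankel (ideal_cap IY IX) L -> hankel (ideal_cap IX IY) L.
  by move=> L [h1 h2 h3]; split => // p [a b]; apply: h2.
have capC' : forall L, hankel (ideal_cap IX IY) L -> hankel (ideal_cap IY IX) L.
  by move=> L [h1 h2 h3]; split => // p [a b]; apply: h2.
split.
- move=> L; split; last exact: conv_hankel.
  move=> hL; have [LX [LY [hX hY e]]] := split_hankel iX iY hS hL.
  pose P (i : 'I_2) : functional R n :=
    if i == ord0 then (fun m => 2 * LX m) else (fun m => 2 * LY m).
  exists 2%N, (fun _ => 2^-1), P; split.
  + by move=> i; rewrite invr_ge0.
  + by rewrite big_ord_recl big_ord1; field.
  + move=> i; rewrite /P; case: (i == ord0).
      by left; apply: hankel_scale => //; rewrite ler0n.
    by right; apply: hankel_scale => //; rewrite ler0n.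
  + move=> m; rewrite big_ord_recl big_ord1 /P /= e.
    by rewrite !mulrA mulVf ?pnatr_eq0 // !mul1r.
- split.
  + exact: hankel_convex.
  + by move=> L; apply: hankel_capl.
  + move=> L1 L2 t H1 H2 ht Hc; split.
      exact: (face_gen iX iY decX H1 H2 ht Hc).
    apply: (face_gen iX iY decX (t := 1 - t) H2 H1).
      by move: ht => /andP [t0 t1]; apply/andP; split; rewrite ?subr_gt0 // ltrBlDr ltrDl.
    by apply: hankel_ext Hc => m; ring.
- split.
  + exact: hankel_convex.
  + by move=> L; apply: hankel_capr.
  + move=> L1 L2 t H1 H2 ht Hc; split.
      exact: (face_gen iY iX decY (capC' _ H1) (capC' _ H2) ht Hc).
    apply: (face_gen iY iX decY (t := 1 - t) (capC' _ H2) (capC' _ H1)).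
      by move: ht => /andP [t0 t1]; apply/andP; split; rewrite ?subr_gt0 // ltrBlDr ltrDl.
    by apply: hankel_ext Hc => m; ring.
Qed.
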